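(* Let $\mathcal{P}$ be a convex polytope in $\mathbb{R}^n$ symmetric about the origin with nonempty interior, and let $G_{\mathcal{P}}$ be an induced subgraph of $G(\mathbb{R}^n,\Vert\cdot\Vert_{\mathcal{P}})$ with vertex set $V$. Assume there is a graph $\tilde G$ with vertex set $V$ such that for all $x,y\in V$, $\tilde d(x,y)=2$ implies $\Vert x-y\Vert_{\mathcal{P}}=1$. Let $A\subset V$ avoid polytope distance $1$ (i.e. $\Vert x-y\Vert_{\mathcal{P}}\neq1$ for all $x,y\in A$). Then $A$ can be written as a union $A=\bigcup_{C\in\mathcal{C}}C$ of cliques of $\tilde G$ such that $N[C]\cap N[C']=\emptyset$ for all distinct $C,C'\in\mathcal{C}$.
   Context: $\Vert x\Vert_{\mathcal{P}}=\inf\{\lambda\geq0:x\in\lambda\mathcal{P}\}$. $G(\mathbb{R}^n,\Vert\cdot\Vert)$ is the graph on $\mathbb{R}^n$ with $x,y$ adjacent iff $\Vert x-y\Vert=1$. $\tilde d$ denotes graph distance in $\tilde G$. A clique of $\tilde G$ is a set $C\subset V$ any two distinct elements of which are adjacent in $\tilde G$. For $C\subset V$, its closed neighborhood is $N[C]=\{v\in V:\tilde d(v,C)\leq1\}$. *)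

(* Defs.v *)
From mathcomp Require Import all_boot all_order all_algebra.
From mathcomp Require Import classical_sets reals.
Set Implicit Arguments. Unset Strict Implicit. Unset Printing Implicit Defensive.
Import Order.TTheory GRing.Theory Num.Theory.
Local Open Scope ring_scope.
Local Open Scope classical_set_scope.

Section Defs.
Variables (R : realType) (n : nat).
Notation pt := 'rV[R]_n.

Definition conv_hull (m : nat) (v : 'I_m -> pt) : set pt :=
  [set x | exists w : 'I_m -> R, (forall i, 0 <= w i) /\
     \sum_(i < m) w i = 1 /\ x = \sum_(i < m) w i *: v i].

Definition convex_polytope (P : set pt) : Prop :=
  exists m (v : 'I_m -> pt), P = conv_hull v.

Definition origin_symmetric (P : set pt) : Prop :=
  forall x, P x -> P (- x).

(* nonempty interior (w.r.t. the standard topology, via sup-norm boxes) *)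
Definition nonempty_interior (P : set pt) : Prop :=
  exists c : pt, exists eps : R, 0 < eps /\
    forall y : pt, (forall i, `|y 0 i - c 0 i| < eps) -> P y.

Definition polytope_norm (P : set pt) (x : pt) : R :=
  inf [set l : R | 0 <= l /\ exists p, P p /\ x = l *: p].

Inductive walk (V : set pt) (adj : pt -> pt -> Prop) : nat -> pt -> pt -> Prop :=
  | walk0 x : V x -> walk V adj 0 x x
  | walkS k x y z : V x -> adj x y -> walk V adj k y z -> walk V adj k.+1 x z.

Definition gdist_eq (V : set pt) (adj : pt -> pt -> Prop) (k : nat) (x y : pt) : Prop :=
  walk V adj k x y /\ forall j, (j < k)%N -> ~ walk V adj j x y.

Definition is_clique (V : set pt) (adj : pt -> pt -> Prop) (C : set pt) : Prop :=
  C `<=` V /\ forall x y, C x -> C y -> x <> y -> adj x y.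

Definition closed_nbhd (V : set pt) (adj : pt -> pt -> Prop) (C : set pt) : set pt :=
  [set v | V v /\ exists c, C c /\ exists k, (k <= 1)%N /\ walk V adj k v c].

End Defs.

(* Main.v *)
Require Import Defs.
From mathcomp Require Import all_boot all_order all_algebra.
From mathcomp Require Import classical_sets reals.
From Stdlib Require Import Classical.
Import Order.TTheory GRing.Theory Num.Theory.
Local Open Scope ring_scope.
Local Open Scope classical_set_scope.

Lemma walk0_inv (R : realType) (n : nat) (V : set 'rV[R]_n) adj x y :
  walk V adj 0 x y -> x = y.
Proof. move=> h; inversion h; by []. Qed.

Lemma walk1_inv (R : realType) (n : nat) (V : set 'rV[R]_n) adj x y :
  walk V adj 1 x y -> adj x y.
Proof.
move=> h; inversion h; subst.
by move: H2 => /walk0_inv <-.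
Qed.

Theorem lemma4 (R : realType) (n : nat) (P : set 'rV[R]_n)
  (V : set 'rV[R]_n) (adj : 'rV[R]_n -> 'rV[R]_n -> Prop) (A : set 'rV[R]_n) :
  convex_polytope P -> origin_symmetric P -> nonempty_interior P ->
  (forall x y, adj x y -> V x /\ V y) ->
  (forall x y, adj x y -> adj y x) ->
  (forall x, ~ adj x x) ->
  (forall x y, V x -> V y -> gdist_eq V adj 2 x y -> polytope_norm P (x - y) = 1) ->
  A `<=` V ->
  (forall x y, A x -> A y -> polytope_norm P (x - y) <> 1) ->
  exists CC : set (set 'rV[R]_n),
    (forall C, CC C -> is_clique V adj C) /\
    A = \bigcup_(C in CC) C /\
    (forall C C', CC C -> CC C' -> C <> C' ->
       closed_nbhd V adj C `&` closed_nbhd V adj C' = set0).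
Proof.
move=> _ _ _ hV hsym hirr h2 AV hA.
pose E x y := x = y \/ adj x y.
have Esym : forall x y, E x y -> E y x.
  by move=> x y [->|/hsym]; [left|right].
have L2 : forall x y z, A x -> A y -> E z x -> E z y -> E x y.
  move=> x y z Ax Ay hx hy.
  apply: NNPP => nE.
  have nxy : x <> y by move=> e; apply: nE; left.
  have naxy : ~ adj x y by move=> e; apply: nE; right.
  have w2 : walk V adj 2 x y.
    case: hx => [ezx|azx].
      subst z; case: hy => [//|axy]; by [].
    case: hy => [ezy|azy].
      subst z; exfalso; exact: naxy (hsym _ _ azx).
    apply: (walkS (y:=z)); first exact: AV.
      exact: hsym.
    apply: (walkS (y:=y)); first by case: (hV _ _ azy).
      by [].
    apply: walk0; exact: AV.
  apply: (hA x y Ax Ay); apply: h2; [exact: AV|exact: AV|].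
  split => // j; case: j => [_|[_|//]].
    by move=> /(walk0_inv).
  by move=> /walk1_inv.
exists [set C | exists a, A a /\ C = [set b | A b /\ E a b]].
split; [|split].
- move=> C [a [Aa ->]]; split; first by move=> b [Ab _]; exact: AV.
  move=> x y [Ax hx] [Ay hy] nxy.
  by case: (L2 x y a Ax Ay hx hy).
- rewrite eqEsubset; split.
    move=> a Aa; exists [set b | A b /\ E a b]; first by exists a.
    by split => //; left.
  by move=> b [C [a [Aa ->]] [Ab _]].
- move=> C C' [a [Aa ->]] [a' [Aa' ->]] neq.
  rewrite -subset0 => v [[Vv [c [[Ac Eac] [k [hk wc]]]]] [_ [c' [[Ac' Eac'] [k' [hk' wc']]]]]].
  have Evc : E v c.
    move: hk wc; case: k => [_ /(walk0_inv)|[_ /walk1_inv|//]]; by [left|right].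
  have Evc' : E v c'.
    move: hk' wc'; case: k' => [_ /(walk0_inv)|[_ /walk1_inv|//]]; by [left|right].
  have Ecc' := L2 _ _ _ Ac Ac' Evc Evc'.
  have Eac2 := L2 _ _ _ Aa Ac' (Esym _ _ Eac) Ecc'.
  have Eaa' := L2 _ _ _ Aa Aa' (Esym _ _ Eac2) (Esym _ _ Eac').
  apply: neq; rewrite eqEsubset; split.
    move=> b [Ab Eab]; split => //; exact: L2 _ _ _ Aa' Ab Eaa' Eab.
  move=> b [Ab Eab]; split => //; exact: L2 _ _ _ Aa Ab (Esym _ _ Eaa') Eab.
Qed.
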